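(* Let $M$ be a $*$-left Ehresmann monoid with basis $H$. Then: (i) if $h_1\cdots h_n$ is in $H$-canonical form, then $(h_1\cdots h_n)^*=h_n^*$ and $(h_1\cdots h_n)^+=h_1^+$; (ii) if $h\in H$ and $k\in H\setminus E$, then $h^*\ge k^+$ if and only if $hk\in H$, and in that case $(hk)^*=k^*$.
   Context: A $*$-left Ehresmann monoid is a monoid $M$ with unary operations $+,*$ such that $x^+x=x$, $(x^+y^+)^+=x^+y^+$, $x^+y^+=y^+x^+$, $(xy)^+=(xy^+)^+$, $xx^*=x$, $(x^* )^*=x^*$, $x^*y^*=y^*x^*$, $(xy^* )^*y^*=(xy^* )^*$, $(x^* )^+=x^*$, $(x^+)^*=x^+$. Projections: $E=\{a^+\}=\{a^*\}$, ordered by $e\le f$ iff $ef=e$; $\sigma$ is the least monoid congruence containing $E\times E$. $H\subseteq M$ is atomic if: (H1) $E\subseteq H$; (H2) $h\in H,e\in E$ imply $he\in H$ and $(he)^*=h^*e$; (H3) if $h\in H$, $k\in H\setminus E$, $h^*\ge k^+$ then $hk\in H$ and $(hk)^*=k^*$; (H4) every $m\in M$ is $\sigma$-related to some $h\in H$; (H5) if $h,k,w\in H$, $hk\,\sigma\,w$ and $k^*=w^*$, then some $u\in H$ has $u\,\sigma\,h$ and $u^*\ge k^+$. An expression $m=h_1\cdots h_n$ ($n\ge1$, $h_i\in H$) is in $H$-canonical form if $h_i^*<h_{i+1}^+$ for $1\le i<n$ and $h_i\notin E$ for $2\le i\le n$. $M$ has $H$-canonical forms if every element has exactly one expression in $H$-canonical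 form. $H$ is a basis of $M$ if $H$ generates $M$ as a semigroup, $H$ is atomic and $M$ has $H$-canonical forms. *)

(* Defs.v *)
From Stdlib Require Import List.
Import ListNotations.
Set Implicit Arguments.

Record StarLeftEhresmann := {
  car :> Type;
  mul : car -> car -> car;
  one : car;
  plus : car -> car;
  star : car -> car;
  mul_assoc : forall x y z, mul x (mul y z) = mul (mul x y) z;
  mul_1l : forall x, mul one x = x;
  mul_1r : forall x, mul x one = x;
  ax_plus_l : forall x, mul (plus x) x = x;
  ax_plus_idem : forall x y, plus (mul (plus x) (plus y)) = mul (plus x) (plus y);
  ax_plus_comm : forall x y, mul (plus x) (plus y) = mul (plus y) (plus x);
  ax_plus_mul : forall x y, plus (mul x y) = plus (mul x (plus y));
  ax_star_r : forall x, mul x (star x) = x;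
  ax_star_star : forall x, star (star x) = star x;
  ax_star_comm : forall x y, mul (star x) (star y) = mul (star y) (star x);
  ax_star_mul : forall x y, mul (star (mul x (star y))) (star y) = star (mul x (star y));
  ax_plus_of_star : forall x, plus (star x) = star x;
  ax_star_of_plus : forall x, star (plus x) = plus x
}.

Section Defs.
Variable M : StarLeftEhresmann.

Definition isE (x : M) : Prop := exists a : M, x = plus M a.

Definition ple (e f : M) : Prop := mul M e f = e.
Definition plt (e f : M) : Prop := ple e f /\ e <> f.

Definition monoid_congruence (R : M -> M -> Prop) : Prop :=
  (forall x, R x x) /\ (forall x y, R x y -> R y x) /\
  (forall x y z, R x y -> R y z -> R x z) /\
  (forall x y z, R x y -> R (mul M z x) (mul M z y)) /\
  (forall x y z, R x y -> R (mul M x z) (mul M y z)).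

Definition sigma (a b : M) : Prop :=
  forall R : M -> M -> Prop, monoid_congruence R ->
    (forall e f, isE e -> isE f -> R e f) -> R a b.

Definition atomic (H : M -> Prop) : Prop :=
  (forall e, isE e -> H e) /\
  (forall h e, H h -> isE e -> H (mul M h e) /\ star M (mul M h e) = mul M (star M h) e) /\
  (forall h k, H h -> H k -> ~ isE k -> ple (plus M k) (star M h) ->
     H (mul M h k) /\ star M (mul M h k) = star M k) /\
  (forall m, exists h, H h /\ sigma m h) /\
  (forall h k w, H h -> H k -> H w -> sigma (mul M h k) w -> star M k = star M w ->
     exists u, H u /\ sigma u h /\ ple (plus M k) (star M u)).

Fixpoint prod_from (h : M) (t : list M) : M :=
  match t with
  | [] => h
  | k :: t' => mul M h (prod_from k t')
  end.

Fixpoint canon_chain (H : M -> Prop) (h : M) (t : list M) : Prop :=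
  match t with
  | [] => True
  | k :: t' => plt (star M h) (plus M k) /\ H k /\ ~ isE k /\ canon_chain H k t'
  end.

(* the expression h :: t (i.e. h_1 = h, h_2 ... h_n = t) is in H-canonical form *)
Definition canonical (H : M -> Prop) (h : M) (t : list M) : Prop :=
  H h /\ canon_chain H h t.

Definition has_canonical_forms (H : M -> Prop) : Prop :=
  forall m : M,
    (exists h t, canonical H h t /\ prod_from h t = m) /\
    (forall h t h' t', canonical H h t -> prod_from h t = m ->
                       canonical H h' t' -> prod_from h' t' = m ->
                       h = h' /\ t = t').

Definition generates (H : M -> Prop) : Prop :=
  forall m : M, exists h t, H h /\ Forall H t /\ prod_from h t = m.

Definition basis (H : M -> Prop) : Prop :=
  generates H /\ atomic H /\ has_canonical_forms H.

End Defs.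
Arguments isE {M}. Arguments ple {M}. Arguments plt {M}. Arguments sigma {M}.
Arguments atomic {M}. Arguments prod_from {M}. Arguments canon_chain {M}.
Arguments canonical {M}. Arguments has_canonical_forms {M}.
Arguments generates {M}. Arguments basis {M}.

(* Main.v *)
Require Import Defs.
From Stdlib Require Import List Lia Classical.
Import ListNotations.
Set Implicit Arguments.

Section Aux.
Variable M : StarLeftEhresmann.

Lemma plus_one : plus M (one M) = one M.
Proof. pose proof (ax_plus_l M (one M)) as h. rewrite mul_1r in h. exact h. Qed.

Lemma plus_plus x : plus M (plus M x) = plus M x.
Proof. pose proof (ax_plus_idem M x (one M)) as h. rewrite plus_one, mul_1r in h. exact h. Qed.

Lemma E_plus e : isE e -> plus M e = e.
Proof. intros [a ->]. apply plus_plus. Qed.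

Lemma E_star e : isE e -> star M e = e.
Proof. intros [a ->]. apply ax_star_of_plus. Qed.

Lemma E_idem e : isE e -> mul M e e = e.
Proof. intros He. pose proof (ax_plus_l M e) as h. rewrite (E_plus He) in h. exact h. Qed.

Lemma E_comm e f : isE e -> isE f -> mul M e f = mul M f e.
Proof. intros [a ->] [b ->]. apply ax_plus_comm. Qed.

Lemma E_starx x : isE (star M x).
Proof. exists (star M x). symmetry. apply ax_plus_of_star. Qed.

Lemma E_plusx x : isE (plus M x).
Proof. exists x. reflexivity. Qed.

Lemma star_mul_E x e : isE e -> mul M (star M (mul M x e)) e = star M (mul M x e).
Proof. intros He. pose proof (ax_star_mul M x e) as h. rewrite (E_star He) in h. exact h. Qed.

Lemma prod_from_mul_head a b s : prod_from (mul M a b) s = mul M a (prod_from b s).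
Proof. destruct s; simpl; [reflexivity| symmetry; apply mul_assoc]. Qed.

Lemma last_indep (c d d' : M) s : last (c :: s) d = last (c :: s) d'.
Proof. revert c. induction s as [|a s IH]; intro c; [reflexivity|]. change (last (a :: s) d = last (a :: s) d'). apply IH. Qed.

Lemma last_cons' (k d : M) s : last (k :: s) d = last s k.
Proof. destruct s as [|c s]; [reflexivity|]. change (last (c :: s) d = last (c :: s) k). apply last_indep. Qed.

Lemma prod_app_mul (h y z : M) t0 :
  mul M (prod_from h (t0 ++ [y])) z = prod_from h (t0 ++ [mul M y z]).
Proof.
  revert h. induction t0 as [|a t0 IH]; intro h; simpl.
  - symmetry. apply mul_assoc.
  - rewrite <- mul_assoc. f_equal. apply IH.
Qed.

Variable H : M -> Prop.
Hypothesis Hb : basis H.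

Lemma chain_Forall h t : canon_chain H h t -> Forall H t.
Proof.
  revert h. induction t as [|k t IH]; intros h c; simpl in *; constructor.
  - tauto.
  - destruct c as (_ & _ & _ & c). eapply IH; eauto.
Qed.

Lemma prepend x k s : H x -> canonical H k s ->
  exists h' t', canonical H h' t' /\ prod_from h' t' = mul M x (prod_from k s) /\
    length t' <= S (length s) /\ (length t' = S (length s) -> last t' h' = last s k).
Proof.
  destruct Hb as (_ & (H1 & H2 & H3 & _) & _).
  intros Hx [Hk Hc].
  destruct (classic (isE k)) as [kE | kE].
  - exists (mul M x k), s. repeat split.
    + apply H2; auto.
    + destruct s as [|k1 s']; simpl; [exact I|].
      destruct Hc as ([Hle Hne] & Hk1 & Hk1E & Hc'). 
      rewrite (E_star kE) in Hle, Hne.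
      destruct (H2 x k Hx kE) as [_ Hs]. rewrite Hs.
      repeat split; auto.
      * unfold ple in *. rewrite <- mul_assoc, Hle. reflexivity.
      * intro Heq. apply Hne.
        assert (A : mul M (plus M k1) k = plus M k1).
        { rewrite <- Heq, <- mul_assoc, (E_idem kE). reflexivity. }
        unfold ple in Hle. rewrite <- Hle, (E_comm kE (E_plusx k1)). exact A.
    + apply prod_from_mul_head.
    + lia.
    + intro; lia.
  - set (f := mul M (star M x) (plus M k)).
    assert (fE : isE f) by (exists f; unfold f; rewrite <- ax_plus_of_star; symmetry; apply ax_plus_idem).
    assert (Hxk : mul M (mul M x f) k = mul M x k).
    { unfold f. rewrite <- !mul_assoc, (ax_plus_l M k), mul_assoc, ax_star_r. reflexivity. }
    destruct (classic (f = plus M k)) as [Hf | Hf].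
    + assert (Hp : ple (plus M k) (star M x)).
      { unfold ple. rewrite (E_comm (E_plusx k) (E_starx x)). exact Hf. }
      destruct (H3 x k Hx Hk kE Hp) as [Hxk' Hs].
      exists (mul M x k), s. repeat split; auto.
      * destruct s as [|k1 s']; simpl in *; [exact I|]. rewrite Hs. exact Hc.
      * apply prod_from_mul_head.
      * intro; lia.
    + destruct (H2 x f Hx fE) as [_ Hs].
      assert (Hff : mul M (star M x) f = f).
      { unfold f. rewrite mul_assoc, (E_idem (E_starx x)). reflexivity. }
      exists (mul M x f), (k :: s). repeat split.
      * apply H2; auto.
      * rewrite Hs, Hff. unfold ple. unfold f at 1. rewrite <- mul_assoc, (E_idem (E_plusx k)). reflexivity.
      * rewrite Hs, Hff. exact Hf.
      * exact Hk.
      * exact kE.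
      * exact Hc.
      * simpl. rewrite <- (prod_from_mul_head x k s), <- Hxk, prod_from_mul_head. reflexivity.
      * simpl. lia.
      * intros _. apply last_cons'.
Qed.

Lemma normalize x t : H x -> Forall H t ->
  exists h' t', canonical H h' t' /\ prod_from h' t' = prod_from x t /\
    length t' <= length t /\ (length t' = length t -> last t' h' = last t x).
Proof.
  revert x. induction t as [|k t IH]; intros x Hx Ft.
  - exists x, []. repeat split; auto.
  - inversion Ft as [|? ? Hk Ft']; subst.
    destruct (IH k Hk Ft') as (k' & t'' & Hc & Hp & Hl & Hlast).
    destruct (prepend Hx Hc) as (h' & t' & Hc' & Hp' & Hl' & Hlast').
    exists h', t'. split; [exact Hc'|split; [|split]].
    + rewrite Hp', Hp. reflexivity.
    + simpl. lia.
    + intro Heq. simpl in Heq. rewrite last_cons'.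
      rewrite Hlast' by lia. apply Hlast. lia.
Qed.
End Aux.

Theorem mainTheorem11 (M : StarLeftEhresmann) (H : M -> Prop) :
  basis H ->
  (forall (h : M) (t : list M), canonical H h t ->
      star M (prod_from h t) = star M (last t h) /\
      plus M (prod_from h t) = plus M h) /\
  (forall h k : M, H h -> H k -> ~ isE k ->
      (ple (plus M k) (star M h) <-> H (mul M h k)) /\
      (ple (plus M k) (star M h) -> star M (mul M h k) = star M k)).
Proof.
  intros Hb.
  pose proof Hb as (_ & (H1 & H2 & H3 & _) & Hcf).
  split.
  - intros h t Hc. split.
    + destruct t as [|k0 t0'] eqn:Et; [reflexivity|].
      assert (Hne : t <> []) by (rewrite Et; discriminate).
      rewrite <- Et in *. clear k0 t0' Et.
      destruct (exists_last Hne) as (t0 & hn & Et). subst t.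
      rewrite last_last.
      set (m := prod_from h (t0 ++ [hn])).
      set (e := star M m).
      assert (Hm1 : prod_from h (t0 ++ [mul M hn e]) = m).
      { rewrite <- prod_app_mul. apply ax_star_r. }
      assert (FH : Forall H (t0 ++ [hn])) by (destruct Hc as [_ Hc]; eapply chain_Forall; eauto).
      apply Forall_app in FH. destruct FH as [FH0 FHn]. inversion FHn as [|? ? Hhn]; subst.
      assert (FH' : Forall H (t0 ++ [mul M hn e])).
      { apply Forall_app. split; auto. constructor; auto. apply H2; auto. apply E_starx. }
      destruct Hc as [Hh Hc'].
      destruct (@normalize _ _ Hb h _ Hh FH') as (h' & t' & Hc2 & Hp & Hl & Hlast).
      destruct (proj2 (Hcf m) h (t0 ++ [hn]) h' t' (conj Hh Hc') eq_refl Hc2 (eq_trans Hp Hm1))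
        as [<- <-].
      rewrite !length_app in Hlast. simpl in Hlast.
      specialize (Hlast eq_refl). rewrite !last_last in Hlast.
      assert (Hs1 : star M hn = mul M (star M hn) e).
      { rewrite <- (proj2 (H2 hn e Hhn (@E_starx _ m))). rewrite <- Hlast. reflexivity. }
      assert (Hm2 : mul M m (star M hn) = m).
      { unfold m. rewrite prod_app_mul, ax_star_r. reflexivity. }
      pose proof (ax_star_mul M m hn) as A. rewrite Hm2 in A. fold e in A.
      rewrite Hs1. transitivity (mul M e (star M hn)); [symmetry; exact A|]. apply E_comm; [apply E_starx|apply E_starx].
    + revert h Hc. induction t as [|k t IH]; intros h Hc; [reflexivity|].
      simpl. destruct Hc as [Hh ([Hle _] & Hk & _ & Hc')].
      rewrite ax_plus_mul, (IH k (conj Hk Hc')).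
      unfold ple in Hle.
      assert (E1 : mul M h (plus M k) = h).
      { transitivity (mul M (mul M h (star M h)) (plus M k)); [rewrite ax_star_r; reflexivity|].
        rewrite <- mul_assoc, Hle, ax_star_r. reflexivity. }
      rewrite E1. reflexivity.
  - intros h k Hh Hk kE. split; [split|].
    + intro Hp. apply (H3 h k Hh Hk kE Hp).
    + intro Hhk.
      set (f := mul M (star M h) (plus M k)).
      assert (fE : isE f) by (exists f; unfold f; rewrite <- ax_plus_of_star; symmetry; apply ax_plus_idem).
      assert (Hxk : mul M (mul M h f) k = mul M h k).
      { unfold f. rewrite <- !mul_assoc, (ax_plus_l M k), mul_assoc, ax_star_r. reflexivity. }
      destruct (classic (f = plus M k)) as [Hf | Hf].
      * unfold ple. rewrite (E_comm (@E_plusx _ k) (@E_starx _ h)). exact Hf.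
      * exfalso.
        destruct (H2 h f Hh fE) as [Hhf Hs].
        assert (Hff : mul M (star M h) f = f).
        { unfold f. rewrite mul_assoc, (E_idem (@E_starx _ h)). reflexivity. }
        assert (Hc : canonical H (mul M h f) [k]).
        { split; auto. simpl. repeat split; auto.
          - rewrite Hs, Hff. unfold ple. unfold f at 1.
            rewrite <- mul_assoc, (E_idem (@E_plusx _ k)). reflexivity.
          - rewrite Hs, Hff. exact Hf. }
        assert (Hc0 : canonical H (mul M h k) []) by (split; simpl; auto).
        destruct (proj2 (Hcf (mul M h k)) _ _ _ _ Hc Hxk Hc0 eq_refl) as [_ Hd].
        discriminate.
    + intro Hp. apply (H3 h k Hh Hk kE Hp).
Qed.
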